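(* Let $A \in \mathbb{C}^{n \times n}$ and let $\beta \geq 1$ be a real number bounding the spectral radius of $A$ (i.e. every eigenvalue $\lambda$ of $A$ satisfies $|\lambda| \le \beta$). Let $\mu_A(X) = \sum_{i=0}^{d} m_i X^i$ be the minimal polynomial of $A$, of degree $d$. Then for all $i$, $$|m_i| \leq \begin{cases} \beta^d & \text{if } d \leq \beta, \\ \min\left\{ \sqrt{\beta d}^{\,d}\ ;\ \sqrt{\frac{2}{d\pi}}\, 2^d \beta^d \right\} & \text{otherwise.} \end{cases}$$
   Context: The minimal polynomial of $A$ is the monic polynomial of least degree annihilating $A$. *)

(* Defs.v *)
From HB Require Import structures.
From mathcomp Require Import all_boot all_order all_algebra.
From mathcomp Require Import complex.
From mathcomp Require Import all_classical all_reals.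
From mathcomp Require Import trigo.
Set Implicit Arguments. Unset Strict Implicit. Unset Printing Implicit Defensive.
Import Order.TTheory GRing.Theory Num.Theory.
Local Open Scope ring_scope.

Definition minpoly_coef_bound (R : realType) (beta : R) (d : nat) : R :=
  if d%:R <= beta then beta ^+ d
  else Order.min (Num.sqrt (beta * d%:R) ^+ d)
                 (Num.sqrt (2 / (d%:R * pi)) * 2 ^+ d * beta ^+ d).

(* Main.v *)
Require Import Defs.
From HB Require Import structures.
From mathcomp Require Import all_boot all_order all_algebra.
From mathcomp Require Import complex.
From mathcomp Require Import all_classical all_reals.
From mathcomp Require Import trigo.
From mathcomp Require Import ring lra zify.
From mathcomp Require Import topology normedtype derive realfun.
Import Order.TTheory GRing.Theory Num.Theory.
Import numFieldNormedType.Exports.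

Lemma bin_le_exp n k : 'C(n, k) <= n ^ k.
Proof.
apply: (@leq_trans ('C(n, k) * k`!)); first by rewrite leq_pmulr ?fact_gt0.
rewrite bin_ffact ffact_prod.
apply: (@leq_trans (\prod_(i < k) n)); first by apply: leq_prod => i _; rewrite leq_subr.
by rewrite prod_nat_const card_ord.
Qed.

Lemma bin_up n j : j < n./2 -> 'C(n, j) <= 'C(n, j.+1).
Proof.
move=> hj.
have e := mul_bin_left n j.
have hn : j.+1 <= n - j by have := odd_double_half n; case: (odd n) => /= hd; lia.
have : j.+1 * 'C(n, j) <= j.+1 * 'C(n, j.+1).
  by rewrite e leq_mul2r hn orbT.
by rewrite leq_mul2l.
Qed.

Lemma bin_le_mid d k : 'C(d, k) <= 'C(d, d./2).
Proof.
wlog hk : k / k <= d./2.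
  move=> H; case: (leqP k d./2) => hk; first exact: H.
  case: (leqP k d) => hkd; last by rewrite bin_small.
  rewrite -bin_sub //; apply: H.
  have := odd_double_half d; case: (odd d) => /= hd; lia.
rewrite -(subKn hk); elim: (d./2 - k) (leq_subr k d./2) => [|m IH] hm.
  by rewrite subn0.
apply: leq_trans (IH (ltnW hm)).
rewrite subnS -(prednK (_ : 0 < d./2 - m)) ?subn_gt0 //=.
apply: bin_up; rewrite prednK ?subn_gt0 //; lia.
Qed.

Local Open Scope ring_scope.

Section W.
Variable R : realType.

Fixpoint Fs (n : nat) : R -> R :=
  match n with
  | 0 => fun x => x
  | 1 => fun x => 1 - cos x
  | (m.+2) as k => fun x => - (sin x ^+ m.+1 * cos x) / k%:R + m.+1%:R / k%:R * Fs m x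
  end.

Lemma dsinX (k : nat) (x : R) : is_derive x 1 (fun y : R => sin y ^+ k) (k%:R * sin x ^+ k.-1 * cos x).
Proof.
have -> : (fun y : R => sin y ^+ k) = (@sin R) ^+ k.
  by apply/funext => y; rewrite exprfctE.
by apply: is_derive_eq; rewrite /GRing.scale /= mulrC mulrA.
Qed.

Lemma dFs (n : nat) (x : R) : is_derive x 1 (Fs n) (sin x ^+ n).
Proof.
suff H : forall n, is_derive x 1 (Fs n) (sin x ^+ n) /\ is_derive x 1 (Fs n.+1) (sin x ^+ n.+1).
  exact: (H n).1.
elim=> [|m [IH1 IH2]].
  split.
    by rewrite expr0 /=; apply: is_derive_id.
  rewrite expr1 /=.
  have -> : (fun x : R => 1 - cos x) = cst 1 - (@cos R) by apply/funext.
  by apply: is_derive_eq; rewrite sub0r opprK.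
split => //.
set k := m.+2.
have -> : Fs m.+2 = (- k%:R^-1) *: ((fun y => sin y ^+ m.+1) * (@cos R)) + (m.+1%:R / k%:R) *: Fs m.
  apply/funext => y /=; rewrite /k. rewrite !fctE /GRing.scale /=; field; have := ler0n R m; lra.
have kn0 : k%:R != 0 :> R by rewrite pnatr_eq0.
apply: is_derive_eq.
  apply: is_deriveD; first apply: is_deriveZ.
    exact: is_deriveM (dsinX _ _) (is_derive_cos x).
rewrite /GRing.scale /= -/k.
have e := sin2cos2 x.
have E : forall a, cos x * (a * cos x) = a * (1 - sin x ^+ 2) by move=> a; rewrite e; ring.
rewrite E /k !exprS; field; have := ler0n R m; lra.
Qed.


End W.

Section W2.
Variable R : realType.
Local Notation Fs := (@Fs R).
Lemma Fs0 n : Fs n 0 = 0.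
Proof.
suff H : Fs n 0 = 0 /\ Fs n.+1 0 = 0 by case: H.
elim: n => [|n [IH1 IH2]]; first by rewrite /= cos0 subrr.
split => //=.
by rewrite sin0 expr0n /= mul0r oppr0 mul0r add0r IH1 mulr0.
Qed.

Lemma FsSS n : Fs n.+2 (pi / 2) = n.+1%:R / n.+2%:R * Fs n (pi / 2).
Proof. by rewrite /= cos_pihalf mulr0 oppr0 mul0r add0r. Qed.

Lemma Fs_mono n : Fs n.+1 (pi / 2) <= Fs n (pi / 2).
Proof.
rewrite -subr_ge0.
set G := Fs n - Fs n.+1.
have dG : forall x : R, is_derive x 1 G (sin x ^+ n - sin x ^+ n.+1).
  move=> x; exact: is_deriveB (dFs R n x) (dFs R n.+1 x).
have dG' : forall x : R, derivable G x 1 by move=> x; have [] := dG x.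
have cG := @derivable_within_continuous R R G `[0, pi / 2]%R (fun x _ => dG' x).
have [c cI EQ] := MVT (proj1 (andP (@pihalf_02 R))) (fun x _ => dG x) cG.
have -> : Fs n (pi / 2) - Fs n.+1 (pi / 2) = G (pi / 2) - G 0.
  by rewrite /G !fctE !Fs0 subrr subr0.
rewrite EQ subr0 mulr_ge0 //; last by rewrite divr_ge0 // pi_ge0.
move: cI; rewrite in_itv /= => /andP[c0 c1].
have s0 : 0 < sin c by apply: sin_gt0_pihalf; rewrite c0 c1.
by rewrite exprS -{1}(mul1r (sin c ^+ n)) -mulrBl mulr_ge0 ?subr_ge0 ?sin_le1 // exprn_ge0 // ltW.
Qed.


Lemma binc m : ('C(m.+1.*2, m.+1) * m.+1 = (m.*2.+1).*2 * 'C(m.*2, m))%N.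
Proof.
have e1 := mul_bin_diag (m.+1.*2) m.
have e2 := mul_bin_left (m.*2.+1) m.
have e3 := mul_bin_diag (m.*2.+1) m.
rewrite doubleS /= in e1.
have E : (m.*2.+1 - m)%N = m.+1 by rewrite -addnn -addSn addnK.
move: e2 => /eqP; rewrite E eqn_pmul2l // => /eqP e2.
have e3' : (m.*2.+1 * 'C(m.*2, m) = m.+1 * 'C(m.*2.+1, m.+1))%N := e3.
by rewrite mulnC -e1 -e2 -[(m.*2.+1).*2]mul2n -mulnA e3' mulnA mul2n.
Qed.

Lemma bincR m : ('C(m.+1.*2, m.+1))%:R = 2 * (2 * m%:R + 1) * ('C(m.*2, m))%:R / m.+1%:R :> R.
Proof.
apply: (mulIf (_ : m.+1%:R != 0 :> R)); first by rewrite pnatr_eq0.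
rewrite mulfVK ?pnatr_eq0 // -(natrM R _ m.+1) binc natrM; congr (_ * _); rewrite -!muln2 !natrM -addn1 natrD !natrM; ring.
Qed.


Lemma natS' (k : nat) : k.+1%:R = k%:R + 1 :> R.
Proof. by rewrite -addn1 natrD. Qed.

Lemma natD2 (k : nat) : (k.*2)%:R = 2 * k%:R :> R.
Proof. by rewrite -muln2 natrM mulrC. Qed.

Lemma aE m : Fs (m.*2) (pi / 2) * 4 ^+ m = pi / 2 * ('C(m.*2, m))%:R.
Proof.
elim: m => [|m IH]; first by rewrite /= expr0 mulr1 ?bin0 ?mulr1.
have h4 : (4 : R) ^+ m != 0 by rewrite expf_neq0 // pnatr_eq0.
have IH' : Fs (m.*2) (pi / 2) = pi / 2 * ('C(m.*2, m))%:R / 4 ^+ m.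
  by rewrite -IH mulfK.
rewrite doubleS FsSS bincR exprS IH' !natS' natD2.
have := ler0n R m => hm.
field; apply/and3P; split; rewrite ?expf_neq0 //; apply/eqP; lra.
Qed.

Lemma bE m : Fs (m.*2.+1) (pi / 2) * (m.*2.+2)%:R * ('C(m.+1.*2, m.+1))%:R = 4 ^+ m.+1.
Proof.
elim: m => [|m IH].
  by rewrite /= cos_pihalf subr0 bin1 mul1r expr1 -natrM.
have hC : ('C(m.+1.*2, m.+1))%:R != 0 :> R by rewrite pnatr_eq0 -lt0n bin_gt0 -addnn leq_addl.
have IH' : Fs (m.*2.+1) (pi / 2) = 4 ^+ m.+1 / ('C(m.+1.*2, m.+1))%:R / (m.*2.+2)%:R.
  by rewrite -IH mulfK // mulfK // pnatr_eq0.
have hW : ('C(m.*2, m))%:R != 0 :> R by rewrite pnatr_eq0 -lt0n bin_gt0 -addnn leq_addl.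
rewrite doubleS FsSS [in LHS]bincR IH' !exprS.
rewrite !natS' !natD2 /=.
have := ler0n R m => hm.
field; apply/and4P; split; rewrite ?hC //; apply/eqP; lra.
Qed.

Lemma wallis m : (pi : R) * m.+1%:R * ('C(m.+1.*2, m.+1))%:R ^+ 2 <= 16 ^+ m.+1.
Proof.
set C := ('C(m.+1.*2, m.+1))%:R : R.
set q := (4 : R) ^+ m.+1.
set K := (m.*2.+2)%:R : R.
have ha := aE m.+1; have hb := bE m.
have hm := Fs_mono (m.*2.+1).
rewrite -/C -/q in ha; rewrite -/C -/q -/K in hb.
have -> : (pi : R) * m.+1%:R * C ^+ 2 = (Fs (m.+1.*2) (pi / 2) * q) * (K * C).
  by rewrite ha /K -doubleS natD2; field.
have -> : (16 : R) ^+ m.+1 = (Fs (m.*2.+1) (pi / 2) * q) * (K * C).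
  rewrite (_ : (16 : R) = 4 * 4); last by lra.
  by rewrite exprMn -/q -{1}hb; ring.
apply: ler_wpM2r; first by rewrite mulr_ge0 // ?ler0n.
by apply: ler_wpM2r; [rewrite exprn_ge0 //; lra | rewrite doubleS].
Qed.

End W2.

Section P.
Variable R : rcfType.
Local Notation C := R[i].

Lemma coef_prod_bound (b : R) (s : seq C) : 0 <= b ->
  (forall z, z \in s -> `|z| <= b%:C%C) ->
  forall k, `|(\prod_(z <- s) ('X - z%:P))`_k| <= ('C(size s, k))%:R * (b%:C%C) ^+ (size s - k).
Proof.
move=> b0; set B := b%:C%C.
have B0 : 0 <= B by rewrite /B ler0c.
elim: s => [|z s IH] Hs k.
  rewrite big_nil coefC /=; case: k => [|k] /=; first by rewrite normr1 expr0 mulr1.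
  by rewrite normr0 mul0r.
have Hz : `|z| <= B by apply: Hs; rewrite mem_head.
have IH' := IH (fun w hw => Hs w (mem_behead (hw : w \in behead (z :: s)))).
rewrite big_cons mulrBl coefB coefXM coefCM /=.
case: k => [|k] /=.
  rewrite sub0r normrN normrM bin0 mul1r subn0 exprS.
  apply: ler_pM (normr_ge0 _) (normr_ge0 _) Hz _.
  by have := IH' 0%N; rewrite bin0 mul1r subn0.
have E : ('C(size s, k.+1))%:R * B ^+ (size s - k) = B * (('C(size s, k.+1))%:R * B ^+ (size s - k.+1)).
  case: (leqP k.+1 (size s)) => hk.
    by rewrite subnS -(prednK (_ : 0 < size s - k)%N) ?subn_gt0 //= exprS mulrCA.
  by rewrite bin_small // !mul0r mulr0.
rewrite subSS binS natrD mulrDl [X in _ <= X]addrC.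
apply: (le_trans (ler_normB _ _)).
apply: lerD; first exact: IH'.
rewrite E normrM; exact: ler_pM (normr_ge0 _) (normr_ge0 _) Hz (IH' _).
Qed.


Lemma minpoly_coef_le n (A : 'M[C]_n.+1) (b : R) : 0 <= b ->
  (forall l : C, eigenvalue A l -> `|l| <= b%:C%C) ->
  forall i, `|(mxminpoly A)`_i| <=
     (('C((size (mxminpoly A)).-1, i))%:R * b ^+ ((size (mxminpoly A)).-1 - i))%:C%C.
Proof.
move=> b0 Hev i.
have [r Hr] := closed_field_poly_normal (mxminpoly A).
move: Hr; rewrite (monicP (mxminpoly_monic A)) scale1r => Hr.
have Hs : (size (mxminpoly A)).-1 = size r by rewrite Hr size_prod_XsubC.
rewrite Hs rmorphM rmorphXn /= rmorph_nat Hr.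
apply: coef_prod_bound => // z zr; apply: Hev.
by rewrite eigenvalue_root_min Hr root_prod_XsubC.
Qed.

End P.

Section F.
Variable R : realType.

Lemma pi_le4 : (pi : R) <= 4.
Proof. have := @pihalf_lt2 R; lra. Qed.

Lemma cbin d : (0 < d)%N -> ('C(d, d./2))%:R ^+ 2 * (d%:R * pi) <= 2 * 4 ^+ d :> R.
Proof.
move=> d0.
have hpi := @pi_ge2 R.
have e16 : forall m, (4 : R) ^+ (m.*2) = 16 ^+ m.
  by move=> m; rewrite -mul2n exprM; congr (_ ^+ _); rewrite expr2; lra.
have := odd_double_half d; case: (odd d) => /= hd.
  case: d./2 hd => [|m] hd.
    rewrite -hd /= bin0 expr1n mul1r expr1 (_ : (1 + 0.*2)%N = 1%N) // mul1r; have := @pi_le4; lra.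
  rewrite add1n in hd; rewrite -hd.
  set W := ('C(m.+1.*2, m.+1))%:R : R.
  have hw := wallis R m; rewrite -/W in hw.
  have hb : ('C(m.+1.*2.+1, m.+1))%:R * m.+2%:R = (m.+1.*2.+1)%:R * W :> R.
    have e3 := mul_bin_diag (m.+1.*2.+1) m.+1.
    have e2 := mul_bin_left (m.+1.*2.+1) m.+1.
    have E : (m.+1.*2.+1 - m.+1)%N = m.+2 by lia.
    rewrite E in e2.
    by rewrite /W -!natrM mulnC -e2 -e3.
  have hW : 0 <= W by rewrite ler0n.
  set M := m%:R : R.
  have hm : 0 <= M := ler0n R m.
  rewrite [(4 : R) ^+ _]exprS e16.
  set D := (m.+1.*2.+1)%:R : R.
  set X := ('C(_, _))%:R : R.
  have hD : D = 2 * M + 3 by rewrite /D /M !natS' natD2 natS'; ring.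
  rewrite -/D -/X !natS' -/M in hb.
  rewrite natS' -/M in hw.
  set P := (M + 1 + 1) ^+ 2.
  have hP : 0 < P by rewrite exprn_gt0 //; lra.
  suff key : X ^+ 2 * (D * pi) * P <= 2 * (4 * 16 ^+ m.+1) * P by rewrite ler_pM2r in key.
  have hb2 : X ^+ 2 * (M + 1 + 1) ^+ 2 = D ^+ 2 * W ^+ 2 by rewrite -!exprMn hb.
  have E1 : X ^+ 2 * (D * pi) * P = D ^+ 3 * (pi * W ^+ 2).
    apply: (@eq_trans _ _ (D * pi * (X ^+ 2 * (M + 1 + 1) ^+ 2))); first by rewrite /P; ring.
    by rewrite hb2; ring.
  rewrite E1.
  apply: (@le_trans _ _ (8 * (M + 1) * P * (pi * W ^+ 2))).
    apply: ler_wpM2r; first by rewrite mulr_ge0 ?exprn_ge0 //; lra.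
    rewrite hD /P; nra.
  have -> : 8 * (M + 1) * P * (pi * W ^+ 2) = 8 * P * (pi * (M + 1) * W ^+ 2) by ring.
  rewrite (_ : 2 * (4 * 16 ^+ m.+1) * P = 8 * P * 16 ^+ m.+1); last by ring.
  apply: ler_wpM2l => //; apply: mulr_ge0; [lra | exact: ltW].
case: d./2 hd => [|m] hd; first by rewrite -hd in d0.
rewrite -hd.
have hw := wallis R m.
rewrite e16 natD2.
rewrite natS' in hw *.
set W := ('C(_, _))%:R in hw *.
have -> : W ^+ 2 * (2 * (m%:R + 1) * pi) = 2 * (pi * (m%:R + 1) * W ^+ 2) by ring.
by rewrite ler_pM2l //; lra.
Qed.


Lemma sqle (x y : R) : 0 <= y -> x ^+ 2 <= y ^+ 2 -> x <= y.
Proof.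
move=> y0 h; case: (lerP x 0) => hx; first exact: le_trans hx y0.
have t : (0 < 2)%N by []. by rewrite -(ler_pXn2r t) // nnegrE ltW.
Qed.

Lemma cbin_sqrt d k : (0 < d)%N ->
  ('C(d, k))%:R <= Num.sqrt (2 / (d%:R * pi)) * 2 ^+ d :> R.
Proof.
move=> d0.
have hd : 0 < d%:R * pi :> R by rewrite mulr_gt0 ?ltr0n ?pi_gt0.
apply: (@le_trans _ _ ('C(d, d./2))%:R); first by rewrite ler_nat bin_le_mid.
apply: sqle; first by rewrite mulr_ge0 ?sqrtr_ge0 ?exprn_ge0.
rewrite exprMn sqr_sqrtr; last by rewrite divr_ge0 // ltW.
rewrite -exprM mulnC exprM (_ : (2 : R) ^+ 2 = 4); last by rewrite expr2; lra.
rewrite mulrAC ler_pdivlMr //.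
exact: cbin.
Qed.

Lemma final_bound (b : R) (d i : nat) : 1 <= b ->
  ('C(d, i))%:R * b ^+ (d - i) <= minpoly_coef_bound b d.
Proof.
move=> b1; have b0 : 0 <= b by apply: le_trans b1; exact: ler01.
have bnd0 : 0 <= minpoly_coef_bound b d.
  rewrite /minpoly_coef_bound; case: ifP => _; first by rewrite exprn_ge0.
  rewrite le_min; apply/andP; split; first by rewrite exprn_ge0 ?sqrtr_ge0.
  by rewrite !mulr_ge0 ?exprn_ge0 ?sqrtr_ge0.
case: (leqP i d) => hid; last by rewrite bin_small // mul0r.
have [j ->] : exists j, d = (i + j)%N by exists (d - i)%N; rewrite subnKC.
rewrite addKn; rewrite /minpoly_coef_bound; case: ifP => hdb.
  apply: (@le_trans _ _ (b ^+ i * b ^+ j)); last by rewrite exprD.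
  apply: ler_wpM2r; first by rewrite exprn_ge0.
  apply: (@le_trans _ _ ((i + j)%:R ^+ i)).
    by rewrite -natrX ler_nat bin_le_exp.
  by rewrite lerXn2r // nnegrE ler0n.
move/negbT: hdb; rewrite -ltNge => hdb.
set D := (i + j)%:R : R.
have D1 : 1 <= D by apply: le_trans b1 (ltW hdb).
rewrite le_min; apply/andP; split.
  apply: sqle; first by rewrite exprn_ge0 ?sqrtr_ge0.
  rewrite exprAC sqr_sqrtr; last by rewrite mulr_ge0 // ler0n.
  have bD1 : 1 <= b * D by rewrite -(mulr1 1) ler_pM // ler01.
  have sqm : forall x x' y : R, 0 <= x -> x <= x' -> 0 <= y -> (x * y) ^+ 2 <= (x' * y) ^+ 2.
    move=> x x' y x0 xx y0; have x'0 : 0 <= x' := le_trans x0 xx.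
    by apply: lerXn2r; rewrite ?nnegrE ?mulr_ge0 // ler_wpM2r.
  case: (leqP j i) => hji.
    apply: (@le_trans _ _ ((D ^+ j * b ^+ j) ^+ 2)).
      apply: sqm; rewrite ?exprn_ge0 ?ler0n //.
      rewrite -[X in 'C(_, X)](addnK j i) bin_sub ?leq_addl // /D -natrX ler_nat.
      exact: bin_le_exp.
    rewrite -exprMn -exprM mulrC; apply: ler_weXn2l => //; lia.
  apply: (@le_trans _ _ ((D ^+ i * b ^+ j) ^+ 2)).
    apply: sqm; rewrite ?exprn_ge0 ?ler0n // /D -natrX ler_nat.
    exact: bin_le_exp.
  have [t ->] : exists t, j = (i + t)%N by exists (j - i)%N; rewrite subnKC // ltnW.
  have -> : (D ^+ i * b ^+ (i + t)) ^+ 2 = (b * D) ^+ (i + i) * (b ^+ t * b ^+ t).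
    by rewrite !exprMn !exprD; ring.
  have -> : (b * D) ^+ (i + (i + t)) = (b * D) ^+ (i + i) * (b ^+ t * D ^+ t).
    by rewrite !exprMn !exprD; ring.
  apply: ler_wpM2l; first by rewrite exprn_ge0 // mulr_ge0.
  apply: ler_wpM2l; first by rewrite exprn_ge0.
  apply: lerXn2r; rewrite ?nnegrE //; exact: ltW.
apply: ler_pM; rewrite ?ler0n ?exprn_ge0 //.
  apply: cbin_sqrt; case: (i + j)%N hdb => //; rewrite /= => h.
  by have := lt_le_trans h b0; rewrite ltxx.
by rewrite ler_weXn2l // leq_addl.
Qed.

End F.

Theorem lemma3 (R : realType) (n : nat) (A : 'M[R[i]]_n.+1) (beta : R) :
  1 <= beta ->
  (forall lambda : R[i], eigenvalue A lambda -> `|lambda| <= beta%:C%C) ->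
  forall i : nat,
    `|(mxminpoly A)`_i| <=
      (minpoly_coef_bound beta (size (mxminpoly A)).-1)%:C%C.
Proof.
move=> b1 Hev i.
have b0 : 0 <= beta by apply: le_trans b1; exact: ler01.
apply: (le_trans (@minpoly_coef_le R n A beta b0 Hev i)).
by rewrite lecR final_bound.
Qed.
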